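(* Let $\mathbb{F}$ be a field of characteristic $2$ with at least $4$ elements, let $k\geq 2$ be an integer, and let $B\in M_{4k}(\mathbb{F})$ be a non-derogative matrix. Let $a\in\mathbb{F}$ with $a\neq 0,1$. (a) If $\operatorname{Trace}(B)=c\neq 0$, then there exist $N,D\in M_{4k}(\mathbb{F})$ with $B=N+D$, $N^2=0$, and $D$ diagonalizable with every eigenvalue in $\{0,\ c,\ ca,\ c(a+1)\}$. (b) If $\operatorname{Trace}(B)=0$, then there exist $N,D\in M_{4k}(\mathbb{F})$ with $B=N+D$, $N^2=0$, and $D$ diagonalizable with every eigenvalue in $\{0,1,a,a+1\}$.
   Context: A square matrix is non-derogative if its minimal polynomial equals its characteristic polynomial. A matrix $D\in M_n(\mathbb{F})$ is diagonalizable if there exists an invertible $U\in M_n(\mathbb{F})$ such that $U^{-1}DU$ is diagonal. *)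

(* Defs.v *)
From HB Require Import structures.
From mathcomp Require Import all_boot all_order all_algebra.
Set Implicit Arguments. Unset Strict Implicit. Unset Printing Implicit Defensive.
Import GRing.Theory.
Local Open Scope ring_scope.

(* A square matrix is non-derogative if its minimal polynomial equals its
   characteristic polynomial.  mathcomp's [mxminpoly] is only defined for
   matrices of size n.+1; the size-0 case is vacuous. *)
Definition non_derogative (F : fieldType) (n : nat) : 'M[F]_n -> Prop :=
  match n return 'M[F]_n -> Prop with
  | 0 => fun _ => True
  | n'.+1 => fun A => mxminpoly A = char_poly A
  end.

(* Main.v *)
Require Import Defs.
From HB Require Import structures.
From mathcomp Require Import all_boot all_order all_algebra.
From mathcomp Require Import zify ring.
From Stdlib Require Import Classical.
Set Implicit Arguments. Unset Strict Implicit. Unset Printing Implicit Defensive.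
Import GRing.Theory.
Local Open Scope ring_scope.
Section Irr.
Variable F : fieldType.
Implicit Types p q h : {poly F}.

Lemma irr_scale p c : irreducible_poly p -> c != 0 -> irreducible_poly (c *: p).
Proof.
move=> [sp Hp] cnz; split; first by rewrite size_scale.
move=> q sq; rewrite dvdpZr // => /(Hp _ sq) Hq.
by apply: eqp_trans Hq _; rewrite eqp_sym eqp_scale.
Qed.

Lemma irr_factor h : (1 < size h)%N -> exists pi, [/\ irreducible_poly pi, pi \is monic & pi %| h].
Proof.
have [s] := ubnP (size h); elim: s h => [|s IH] h //.
move=> sh h1.
have hnz : h != 0 by rewrite -size_poly_gt0 (ltn_trans _ h1).
have [Hirr|Hn] := classic (irreducible_poly h).
  exists ((lead_coef h)^-1 *: h); split.
  - by apply: irr_scale; rewrite // invr_eq0 lead_coef_eq0.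
  - by rewrite monicE lead_coefZ mulVf // lead_coef_eq0.
  - by rewrite dvdpZl // invr_eq0 lead_coef_eq0.
have : ~ (forall q, size q != 1%N -> q %| h -> q %= h).
  by move=> H; apply: Hn; split.
move=> /not_all_ex_not [q] Hq.
have [sq Hq'] := imply_to_and _ _ Hq.
have [qh nqh] := imply_to_and _ _ Hq'.
have qnz : q != 0 by apply/eqP => q0; move: qh; rewrite q0 dvd0p (negPf hnz).
have sqh : (size q <= size h)%N by apply: dvdp_leq.
have sqh' : size q != size h.
  by apply/negP => Hs; apply: nqh; rewrite -(dvdp_size_eqp qh).
have q1 : (1 < size q)%N.
  by move: sq qnz; rewrite -size_poly_eq0; case: (size q) => [|[|]].
have shs : (size h <= s)%N by [].
have sqs : (size q < s)%N.
  by apply: (@leq_trans (size h)) => //; rewrite ltn_neqAle sqh' sqh.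
have [pi [pii pim piq]] := IH q sqs q1.
exists pi; split => //; exact: dvdp_trans piq qh.
Qed.

Lemma irr_coprime pi q : irreducible_poly pi -> ~~ (pi %| q) -> coprimep pi q.
Proof.
move=> ipi npq; have [] := irredp_XsubCP ipi (dvdp_gcdl pi q).
  by rewrite coprimep_def size_poly_eq1.
move=> Hg; move: npq; rewrite -(eqp_dvdl _ Hg).
by rewrite dvdp_gcdr.
Qed.

End Irr.
Section Cyclic.
Variables (F : fieldType) (n' : nat).
Local Notation n := n'.+1.
Variable A : 'M[F]_n.

Definition ann (v : 'rV[F]_n) (g : {poly F}) := v *m horner_mx A g = 0.
Definition spec v mu := [/\ mu \is monic, ann v mu & forall g, ann v g -> mu %| g].

Lemma annM v g h : ann v g -> ann v (g * h).
Proof. by rewrite /ann rmorphM /= -mulmxE mulmxA => ->; rewrite mul0mx. Qed.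

Lemma annMl v g h : ann v h -> ann v (g * h).
Proof. by rewrite mulrC; apply: annM. Qed.

Lemma annB v g h : ann v g -> ann v h -> ann v (g - h).
Proof. by rewrite /ann rmorphB /= mulmxBr => -> ->; rewrite subr0. Qed.

Lemma ann_addv v w g : ann v g -> ann w g -> ann (v + w) g.
Proof. by rewrite /ann mulmxDl => -> ->; rewrite addr0. Qed.

Lemma ann_subv v w g : ann v g -> ann w g -> ann (v - w) g.
Proof. by rewrite /ann mulmxBl => -> ->; rewrite subr0. Qed.

Lemma ann_hor v h g : ann (v *m horner_mx A h) g <-> ann v (h * g).
Proof. by rewrite /ann rmorphM /= -mulmxE mulmxA. Qed.

Lemma ann_min v : ann v (mxminpoly A).
Proof. by rewrite /ann mx_root_minpoly mulmx0. Qed.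

Lemma spec_exists v : exists mu, spec v mu.
Proof.
suff H : forall s g, g != 0 -> ann v g -> (size g <= s)%N -> exists mu, spec v mu.
  apply: (H _ (mxminpoly A)) => //; last exact: ann_min.
  exact: monic_neq0 (mxminpoly_monic A).
elim=> [|s IH] g gnz ag; first by rewrite leqn0 size_poly_eq0 (negPf gnz).
move=> sg.
have [Hall|] := classic (forall h, ann v h -> g %| h).
  exists ((lead_coef g)^-1 *: g); split.
  - by rewrite monicE lead_coefZ mulVf // lead_coef_eq0.
  - by rewrite /ann linearZ /= -scalemxAr ag scaler0.
  - by move=> h /Hall; rewrite dvdpZl // invr_eq0 lead_coef_eq0.
move=> /not_all_ex_not [h] HH; have [ah ndh] := imply_to_and _ _ HH.
have rnz : h %% g != 0 by apply/negP => Hm; apply: ndh; exact: Hm.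
apply: (IH (h %% g)) => //.
  have -> : h %% g = h - h %/ g * g by rewrite {2}(divp_eq h g) addrC addKr.
  by apply: annB => //; apply: annMl.
by rewrite -ltnS (leq_trans _ sg) // ltn_modp.
Qed.

Lemma spec_factor v mu h f : spec v mu -> mu = h * f -> f \is monic -> h != 0 ->
  spec (v *m horner_mx A h) f.
Proof.
move=> [mum amu mumin] muE fm hnz; split => //.
  by apply/ann_hor; rewrite -muE.
by move=> g /ann_hor /mumin; rewrite muE dvdp_mul2l.
Qed.

Lemma spec_coprime v mu w nu : spec v mu -> spec w nu -> coprimep mu nu ->
  spec (v + w) (mu * nu).
Proof.
move=> [mum amu mumin] [num anu numin] cop; split.
- by rewrite monicMl.
- by apply: ann_addv; [apply: annM | apply: annMl].
move=> g ag.
rewrite Gauss_dvdp //; apply/andP; split.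
  have : ann v (nu * g).
    have -> : v = (v + w) - w by rewrite -addrA subrr addr0.
    by apply: ann_subv; [apply: annMl | apply: annM].
  by move/mumin; rewrite Gauss_dvdpr.
have : ann w (mu * g).
  have -> : w = (v + w) - v by rewrite addrC addKr.
  by apply: ann_subv; [apply: annMl | apply: annM].
by move/numin; rewrite Gauss_dvdpr // coprimep_sym.
Qed.


Lemma spec_size_le v mu : spec v mu -> (size mu <= size (mxminpoly A))%N.
Proof.
case=> _ _ H; apply: dvdp_leq; first exact: monic_neq0 (mxminpoly_monic A).
exact: H _ (ann_min v).
Qed.

Lemma step v mu w nu : spec v mu -> spec w nu -> ~~ (nu %| mu) ->
  exists x xi, spec x xi /\ (size mu < size xi)%N.
Proof.
move=> smu snu ndiv.
have [mum amu mumin] := smu; have [num anu numin] := snu.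
have munz : mu != 0 := monic_neq0 mum.
have nunz : nu != 0 := monic_neq0 num.
set d := gcdp mu nu.
have dnu : d %| nu := dvdp_gcdr mu nu.
have dmu : d %| mu := dvdp_gcdl mu nu.
set h := nu %/ d.
have nuE : nu = h * d by rewrite divpK.
have hnz : h != 0 by apply: contraNneq nunz => h0; rewrite nuE h0 mul0r.
have dnz : d != 0 by apply: contraNneq nunz => d0; rewrite nuE d0 mulr0.
have h1 : (1 < size h)%N.
  rewrite ltnNge; apply/negP => hs.
  have sh1 : size h = 1%N.
    by move: hnz hs; rewrite -size_poly_eq0; case: (size h) => [|[|]].
  have : size d == size nu by rewrite nuE size_mul // sh1.
  rewrite (dvdp_size_eqp dnu) => Hd.
  by move: ndiv; rewrite -(eqp_dvdl _ Hd) dmu.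
have [pi [pii pim pih]] := irr_factor h1.
have pis : (1 < size pi)%N := pii.1.
have pinz : pi != 0 := irredp_neq0 pii.
have expb : forall p, p != 0 -> forall a, pi ^+ a %| p -> (a <= size p)%N.
  move=> p pnz a Ha; have := dvdp_leq pnz Ha.
  have := size_exp pi a.
  have : pi ^+ a != 0 by rewrite expf_neq0.
  rewrite -size_poly_gt0.
  have : (a <= (size pi).-1 * a)%N by rewrite leq_pmull // -ltnS prednK // ltnW.
  move=> H4 _ H2 H1; rewrite -H2 in H4.
  exact: leq_trans H4 (leq_trans (leq_pred _) H1).
have ex0 : forall p, exists a, pi ^+ a %| p by move=> p; exists 0%N; rewrite expr0 dvd1p.
have [a Pa amax] := ex_maxnP (ex0 mu) (expb mu munz).
have [b Pb bmax] := ex_maxnP (ex0 d) (expb d dnz).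
have Pb1 : pi ^+ b.+1 %| nu by rewrite exprS nuE dvdp_mul.
have Pa1 : pi ^+ a.+1 %| nu.
  case: (leqP a b) => ab.
    by apply: dvdp_trans Pb1; rewrite dvdp_exp2l.
  have : pi ^+ b.+1 %| d.
    by rewrite dvdp_gcd Pb1 andbT (dvdp_trans _ Pa) // dvdp_exp2l.
  by move/bmax; rewrite ltnn.
set mu' := mu %/ pi ^+ a.
have muE : mu = mu' * pi ^+ a by rewrite divpK.
have npi : ~~ (pi %| mu').
  apply/negP => Hp.
  have : pi ^+ a.+1 %| mu by rewrite exprSr muE mulrC dvdp_mul.
  by move/amax; rewrite ltnn.
have cop : coprimep mu' (pi ^+ a.+1).
  by rewrite coprimep_sym; apply: coprimep_expl; apply: irr_coprime.
set nu' := nu %/ pi ^+ a.+1.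
have nuE' : nu = nu' * pi ^+ a.+1 by rewrite divpK.
have nu'nz : nu' != 0 by apply: contraNneq nunz => h0; rewrite nuE' h0 mul0r.
have mu'm : mu' \is monic by move: mum; rewrite muE monicMr // monic_exp.
have mu'nz : mu' != 0 := monic_neq0 mu'm.
have s1 : spec (v *m horner_mx A (pi ^+ a)) mu'.
  apply: (spec_factor smu) => //; first by rewrite mulrC.
  by rewrite expf_neq0.
have s2 : spec (w *m horner_mx A nu') (pi ^+ a.+1).
  by apply: (spec_factor snu) => //; rewrite monic_exp.
exists (v *m horner_mx A (pi ^+ a) + w *m horner_mx A nu'), (mu' * pi ^+ a.+1).
split; first exact: spec_coprime.
rewrite muE !size_mul ?expf_neq0 //.
have e1 := size_exp pi a; have e2 := size_exp pi a.+1.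
have : pi ^+ a != 0 by rewrite expf_neq0.
rewrite -size_poly_gt0 => q1.
have : pi ^+ a.+1 != 0 by rewrite expf_neq0.
rewrite -size_poly_gt0 => q2.
have : mu' != 0 by [].
rewrite -size_poly_gt0 => q3.
have : ((size pi).-1 * a < (size pi).-1 * a.+1)%N.
  by rewrite ltn_pmul2l // -ltnS prednK // ltnW.
rewrite -e1 -e2 => lt.
rewrite -(prednK q1) -(prednK q2) !addnS /= ltn_add2l.
exact: lt.
Qed.

Lemma iter k : forall v mu, spec v mu -> (size (mxminpoly A) - size mu <= k)%N ->
  exists v' mu', spec v' mu' /\ forall w nu, spec w nu -> nu %| mu'.
Proof.
elim: k => [|k IH] v mu smu hk.
  exists v, mu; split => // w nu snu.
  apply/negPn/negP => nd.
  have [x [xi [sxi lt]]] := step smu snu nd.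
  have := spec_size_le sxi; lia.
have [Hall|Hn] := classic (forall w nu, spec w nu -> nu %| mu).
  by exists v, mu.
have [w Hw] := not_all_ex_not _ _ Hn.
have [nu Hnu] := not_all_ex_not _ _ Hw.
have [snu nd] := imply_to_and _ _ Hnu.
have [x [xi [sxi lt]]] := step smu snu (introN idP nd).
apply: (IH x xi sxi); lia.
Qed.

Lemma cyclic_vec : mxminpoly A = char_poly A -> exists v mu, spec v mu /\ size mu = n.+1.
Proof.
move=> mcE.
have s01 : spec 0 1.
  split; [exact: monic1 | by rewrite /ann mul0mx | by move=> g _; rewrite dvd1p].
have [v [mu [smu Hall]]] := iter s01 (leqnn _).
exists v, mu; split => //.
have hm : horner_mx A mu = 0.
  apply/row_matrixP => i; rewrite row0 rowE.
  have [nu snu] := spec_exists (delta_mx 0 i).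
  have := Hall _ _ snu => /divpK <-.
  by apply: annMl; case: snu.
have := mxminpoly_min hm.
have [mum _ _] := smu.
move/(dvdp_leq (monic_neq0 mum)).
have := spec_size_le smu.
rewrite mcE size_char_poly => H1 H2; apply/eqP; rewrite eqn_leq H1 /=; exact: H2.
Qed.

End Cyclic.

Section Indep.
Variables (F : fieldType) (y : F).
Definition Qp : {poly F} := 'X * ('X - y%:P).

Lemma size_Qp : size Qp = 3%N.
Proof. by rewrite /Qp size_mul ?polyX_eq0 ?polyXsubC_eq0 // size_polyX size_XsubC. Qed.

Lemma Qp_neq0 : Qp != 0.
Proof. by rewrite -size_poly_eq0 size_Qp. Qed.

Definition gsum m (a b : 'I_m -> F) : {poly F} :=
  \sum_(j < m) a j *: Qp ^+ j + (\sum_(j < m) b j *: Qp ^+ j) * 'X.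

Lemma gsumS m (a b : 'I_m.+1 -> F) :
  gsum a b = (a ord0)%:P + (b ord0) *: 'X +
     gsum (fun j => a (lift ord0 j)) (fun j => b (lift ord0 j)) * Qp.
Proof.
have E : forall c : 'I_m.+1 -> F, \sum_(i < m) c (lift ord0 i) *: Qp ^+ bump 0 i =
    (\sum_(j < m) c (lift ord0 j) *: Qp ^+ j) * Qp.
  by move=> c; rewrite mulr_suml; apply: eq_bigr => i _; rewrite /bump /= add1n exprSr scalerAl.
rewrite /gsum !big_ord_recl !expr0 -!alg_polyC /= !E.
rewrite [((b ord0)%:A + _) * 'X]mulrDl -scalerAl mul1r.
move: (_ *: 1) (_ *: 'X) (\sum_(j < m) _) (\sum_(j < m) _) => t1 t2 t3 t4.
ring.
Qed.


Lemma gsum_prop m (a b : 'I_m -> F) :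
  (size (gsum a b) <= m + m)%N /\ (gsum a b = 0 -> forall j, a j = 0 /\ b j = 0).
Proof.
elim: m a b => [|m IH] a b.
  by split; [rewrite /gsum !big_ord0 mul0r addr0 size_poly0 | move=> _ []].
rewrite gsumS.
have [IH1 IH2] := IH (fun j => a (lift ord0 j)) (fun j => b (lift ord0 j)).
set g := gsum _ _ in IH1 IH2 *.
set l := (a ord0)%:P + b ord0 *: 'X.
clearbody g.
have sl : (size l <= 2)%N.
  rewrite /l (leq_trans (size_add _ _)) // geq_max size_polyC.
  by rewrite (leq_trans (size_scale_leq _ _)) ?size_polyX // andbT; case: (_ != 0).
split.
  rewrite (leq_trans (size_add _ _)) // geq_max (leq_trans sl) /=; last lia.
  have [->|gnz] := eqVneq g 0; first by rewrite mul0r size_poly0.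
  rewrite size_mul ?size_Qp // -?size_poly_eq0 ?size_Qp // addnS /=. have := IH1; move: (size g) => s; lia.
move=> H0.
have g0 : g = 0.
  apply/eqP; apply/negPn/negP => gnz.
  have sgQ : size (g * Qp) = (size g + 2)%N.
    by rewrite size_mul ?Qp_neq0 // size_Qp addnS.
  have : size (l + g * Qp) = size (g * Qp).
    rewrite addrC size_polyDl // sgQ; have := sl; move: gnz; rewrite -size_poly_eq0.
    move: (size l) (size g) => x z; lia.
  by rewrite H0 size_poly0 sgQ addn2.
move: H0; rewrite g0 mul0r addr0 => l0.
have a0 : a ord0 = 0 by move: (congr1 (fun p : {poly F} => p`_0) l0); rewrite /l coefD coefC coefZ coefX /= mulr0 addr0 coef0.
have b0 : b ord0 = 0 by move: (congr1 (fun p : {poly F} => p`_1) l0); rewrite /l coefD coefC coefZ coefX /= mulr1 add0r coef0.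
move=> j; case: (unliftP ord0 j) => [j' ->|->] //.
exact: IH2.
Qed.

End Indep.

Section Core.
Variables (F : fieldType) (m' : nat).
Local Notation m := m'.+1.
Variable B : 'M[F]_(m + m).
Variable v : 'rV[F]_(m + m).
Hypothesis Hcyc : forall g, v *m horner_mx B g = 0 -> g = 0 \/ (m + m < size g)%N.
Variable y : F.

Definition Umx : 'M[F]_(m, m + m) := \matrix_(j < m) (v *m horner_mx B (Qp y ^+ j)).
Definition Wmx : 'M[F]_(m, m + m) := Umx *m B.
Definition Pmx : 'M[F]_(m + m) := col_mx Umx Wmx.

Lemma UmxE (c : 'rV[F]_m) : c *m Umx = v *m horner_mx B (\sum_(j < m) c 0 j *: Qp y ^+ j).
Proof.
rewrite mulmx_sum_row linear_sum /= mulmx_sumr; apply: eq_bigr => j _.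
by rewrite rowK linearZ /= scalemxAr.
Qed.

Lemma WmxE (c : 'rV[F]_m) : c *m Wmx = v *m horner_mx B ((\sum_(j < m) c 0 j *: Qp y ^+ j) * 'X).
Proof.
by rewrite /Wmx mulmxA UmxE rmorphM /= horner_mx_X -mulmxE mulmxA.
Qed.

Lemma Pmx_unit : Pmx \in unitmx.
Proof.
rewrite unitmxE unitfE; apply/negP => /det0P [x xnz xP].
move: xP; rewrite -[x]hsubmxK mul_row_col UmxE WmxE -mulmxDr -rmorphD /=.
set g := _ + _ => Hg.
have gE : g = gsum y (fun j => lsubmx x 0 j) (fun j => rsubmx x 0 j) by [].
have [sg gz] := gsum_prop y (fun j => lsubmx x 0 j) (fun j => rsubmx x 0 j).
rewrite -gE in sg gz.
case: (Hcyc Hg) => [/gz H|]; last by rewrite ltnNge sg.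
move: xnz; rewrite -[x]hsubmxK.
have -> : lsubmx x = 0 by apply/rowP => j; rewrite [RHS]mxE; case: (H j).
have -> : rsubmx x = 0 by apply/rowP => j; rewrite [RHS]mxE; case: (H j).
by rewrite row_mx0 eqxx.
Qed.


Definition Bp : 'M[F]_(m + m) := Pmx *m B *m invmx Pmx.
Definition F0 : 'M[F]_m := drsubmx Bp.

Lemma UWiP : Umx *m invmx Pmx = row_mx 1%:M 0 /\ Wmx *m invmx Pmx = row_mx 0 1%:M.
Proof.
have := mulmxV Pmx_unit.
by rewrite /Pmx mul_col_mx (scalar_mx_block m m 1) /block_mx => /eq_col_mx.
Qed.

Lemma Bp_block : Bp = block_mx 0 1%:M (dlsubmx Bp) F0.
Proof.
have dB : dsubmx Bp = Wmx *m B *m invmx Pmx by rewrite /Bp /Pmx !mul_col_mx col_mxKd.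
have uB : usubmx Bp = row_mx 0 1%:M by rewrite /Bp /Pmx !mul_col_mx col_mxKu -/Wmx (proj2 UWiP).
by rewrite /block_mx -uB /F0 /dlsubmx /drsubmx hsubmxK vsubmxK.
Qed.

Lemma Wrow (i : 'I_m) : (i < m')%N ->
  row i (Wmx *m B) = row (inord i.+1) Umx + y *: row i Wmx.
Proof.
move=> im.
rewrite /Wmx !row_mul !rowK inordK ?ltnS // exprSr rmorphM /= -mulmxE.
have -> : horner_mx B (Qp y) = B *m (B - y%:M).
  by rewrite /Qp rmorphM /= rmorphB /= horner_mx_X horner_mx_C -mulmxE.
by rewrite mulmxBr mul_mx_scalar mulmxBr -scalemxAr mulmxBr -scalemxAr !mulmxA subrK.
Qed.

Lemma F0_entry (i j : 'I_m) : (i < m')%N -> F0 i j = y * (i == j)%:R.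
Proof.
move=> im.
have dB : dsubmx Bp = Wmx *m B *m invmx Pmx by rewrite /Bp /Pmx !mul_col_mx col_mxKd.
have Hr : row i (Wmx *m B *m invmx Pmx) = row_mx (delta_mx 0 (inord i.+1)) (y *: delta_mx 0 i).
  rewrite row_mul Wrow // mulmxDl -scalemxAl -!row_mul (proj1 UWiP) (proj2 UWiP).
  by rewrite !row_row_mx !row1 !row0 scale_row_mx scaler0 add_row_mx addr0 add0r.
have := congr1 (fun M : 'rV[F]_(m + m) => M 0 (rshift m j)) Hr.
rewrite /= row_mxEr !mxE /= eq_sym => H.
transitivity ((dsubmx Bp) i (rshift m j)); first by rewrite /F0 !mxE.
by rewrite dB [LHS]mxE H.
Qed.


Lemma tr_Bp : \tr B = \tr F0.
Proof.
have -> : \tr B = \tr Bp.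
  by rewrite /Bp mxtrace_mulC mulKmx // Pmx_unit.
by rewrite Bp_block mxtrace_block mxtrace0 add0r.
Qed.

Lemma F0_max : F0 ord_max ord_max = \tr B - m'%:R * y.
Proof.
rewrite tr_Bp /mxtrace big_ord_recr /=.
have -> : \sum_(i < m') F0 (widen_ord (leqnSn m') i) (widen_ord (leqnSn m') i) = m'%:R * y.
  rewrite (eq_bigr (fun _ => y)); first by rewrite sumr_const card_ord mulr_natl.
  by move=> i _; rewrite F0_entry ?eqxx ?mulr1 //=.
by rewrite addrC addrK.
Qed.

Definition evec : 'cV[F]_m := delta_mx ord_max 0.
Definition rvec : 'rV[F]_m := row ord_max F0 - y *: delta_mx 0 ord_max.

Lemma F0_er : F0 = y%:M + evec *m rvec.
Proof.
rewrite /rvec /evec; have HG := F0_entry; set G := F0 in HG *; clearbody G.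
apply/matrixP => i j; rewrite !mxE big_ord1 !mxE.
case: (eqVneq i ord_max) => [->|ine].
  rewrite eqxx mul1r /=; case: (eqVneq ord_max j) => [<-|nj] /=.
    by rewrite mulr1n mulr1 addrC subrK.
  by rewrite mulr0n mulr0 subr0 add0r.
have im : (i < m')%N.
  have := ltn_ord i; rewrite ltnS leq_eqVlt => /orP [/eqP h|//].
  by case/eqP: ine; apply: ord_inj.
by rewrite HG // /= mul0r addr0 mulr_natr.
Qed.

Lemma re_scal : rvec *m evec = (F0 ord_max ord_max - y)%:M.
Proof.
rewrite /rvec /evec; set G := F0; clearbody G.
apply/matrixP => i j; rewrite (ord1 i) (ord1 j) !mxE (bigD1 ord_max) //= big1.
  by rewrite !mxE !eqxx /= !mulr1 addr0 mulr1n.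
by move=> k kne; rewrite !mxE (negPf kne) /= !mulr0.
Qed.


Lemma Fy_er : F0 - y%:M = evec *m rvec.
Proof. by rewrite {1}F0_er addrC addKr. Qed.

Lemma conj_decomp (Np Dp : 'M[F]_(m + m)) : Np + Dp = Bp -> Np *m Np = 0 ->
  exists N D : 'M[F]_(m + m),
    [/\ B = N + D, N *m N = 0 & D = invmx Pmx *m Dp *m Pmx].
Proof.
move=> NDB NN; exists (invmx Pmx *m Np *m Pmx), (invmx Pmx *m Dp *m Pmx); split => //.
- rewrite -mulmxDl -mulmxDr NDB /Bp !mulmxA mulVmx ?Pmx_unit // mul1mx.
  by rewrite mulmxKV ?Pmx_unit.
- rewrite !mulmxA mulmxK ?Pmx_unit // -[invmx Pmx *m Np *m Np]mulmxA NN.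
  by rewrite mulmx0 mul0mx.
Qed.

Lemma decomp_a : exists N D : 'M[F]_(m + m),
  [/\ B = N + D, N *m N = 0 &
      horner_mx D (\prod_(x <- [:: 0; y; F0 ord_max ord_max]) ('X - x%:P)) = 0].
Proof.
set beta := F0 ord_max ord_max.
pose Dp : 'M[F]_(m + m) := block_mx 0 1%:M 0 F0.
pose Np : 'M[F]_(m + m) := block_mx 0 0 (dlsubmx Bp) 0.
have [N [D [BND NN DE]]] : exists N D : 'M[F]_(m + m),
    [/\ B = N + D, N *m N = 0 & D = invmx Pmx *m Dp *m Pmx].
  apply: (conj_decomp (Np := Np)).
    by rewrite /Np /Dp add_block_mx !addr0 !add0r -Bp_block.
  by rewrite /Np mulmx_block !mulmx0 !mul0mx !addr0 block_mx0.
exists N, D; split => //.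
rewrite DE horner_mx_uconjC ?Pmx_unit //.
suff -> : horner_mx Dp (\prod_(x <- [:: 0; y; beta]) ('X - x%:P)) = 0.
  by rewrite mulmx0 mul0mx.
have -> : horner_mx Dp (\prod_(x <- [:: 0; y; beta]) ('X - x%:P)) =
   (Dp - 0%:M) *m ((Dp - y%:M) *m (Dp - beta%:M)).
  by rewrite !big_cons big_nil mulr1 !rmorphM /= !rmorphB /= !horner_mx_X !horner_mx_C -!mulmxE.
have Hb : forall x : F, Dp - x%:M = block_mx (- x%:M) 1%:M 0 (F0 - x%:M).
  move=> x; rewrite /Dp (scalar_mx_block m m x) opp_block_mx add_block_mx.
  by rewrite !oppr0 !addr0 add0r.
have Fyb : (F0 - y%:M) *m (F0 - beta%:M) = 0.
  have -> : F0 - beta%:M = evec *m rvec + (y - beta)%:M.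
    by rewrite -Fy_er rmorphB /= addrA subrK.
  rewrite Fy_er mulmxDr mul_mx_scalar -mulmxA [rvec *m _]mulmxA re_scal.
  rewrite mul_scalar_mx -scalemxAr -/beta -scalerDl.
  by rewrite addrA subrK subrr scale0r.
have z0 : (0%:M : 'M[F]_m) = 0 by apply/matrixP=> i j; rewrite !mxE mul0rn.
rewrite !Hb !mulmx_block z0 oppr0 !mulmx0 !mul0mx !mul1mx !addr0 !add0r Fyb.
by rewrite !mulmx0 block_mx0.
Qed.



Definition fvec : 'rV[F]_m := delta_mx 0 ord_max.

Lemma fe1 : fvec *m evec = 1%:M.
Proof.
apply/matrixP => i j; rewrite (ord1 i) (ord1 j) !mxE (bigD1 ord_max) //= big1.
  by rewrite !mxE !eqxx /= mulr1 addr0.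
by move=> k kne; rewrite !mxE (negPf kne) /= mulr0.
Qed.

Lemma decomp_b (alpha : F) : y = 1 -> F0 ord_max ord_max = 1 ->
  exists N D : 'M[F]_(m + m),
  [/\ B = N + D, N *m N = 0 &
      horner_mx D (('X * 'X - 'X) * ('X * 'X - 'X + alpha%:P)) = 0].
Proof.
move=> hy hb.
set X := evec *m rvec.
set R : 'M[F]_m := (- alpha) *: (evec *m fvec).
have re0 : rvec *m evec = 0.
  by rewrite re_scal hb hy subrr; apply/matrixP=> i j; rewrite !mxE mul0rn.
have F0E : F0 = 1%:M + X by rewrite F0_er hy.
have RR : R *m R = (- alpha) *: R.
  by rewrite /R -scalemxAl -scalemxAr !mulmxA -[evec *m fvec *m evec]mulmxA fe1 mulmx1.
have RX : R *m X = (- alpha) *: X.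
  by rewrite /R /X -scalemxAl !mulmxA -[evec *m fvec *m evec]mulmxA fe1 mulmx1.
have XR : X *m R = 0.
  by rewrite /R /X -scalemxAr !mulmxA -[evec *m rvec *m evec]mulmxA re0 mulmx0 mul0mx scaler0.
have XX : X *m X = 0.
  by rewrite /X !mulmxA -[evec *m rvec *m evec]mulmxA re0 mulmx0 mul0mx.
pose Dp : 'M[F]_(m + m) := block_mx 0 1%:M R F0.
pose Np : 'M[F]_(m + m) := block_mx 0 0 (dlsubmx Bp - R) 0.
have [N [D [BND NN DE]]] : exists N D : 'M[F]_(m + m),
    [/\ B = N + D, N *m N = 0 & D = invmx Pmx *m Dp *m Pmx].
  apply: (conj_decomp (Np := Np)).
    by rewrite /Np /Dp add_block_mx !addr0 !add0r subrK -Bp_block.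
  by rewrite /Np mulmx_block !mulmx0 !mul0mx !addr0 block_mx0.
exists N, D; split => //.
rewrite DE horner_mx_uconjC ?Pmx_unit //.
suff -> : horner_mx Dp (('X * 'X - 'X) * ('X * 'X - 'X + alpha%:P)) = 0.
  by rewrite mulmx0 mul0mx.
have -> : horner_mx Dp (('X * 'X - 'X) * ('X * 'X - 'X + alpha%:P)) =
   (Dp *m Dp - Dp) *m (Dp *m Dp - Dp + alpha%:M).
  by rewrite !rmorphM /= !rmorphD /= ?rmorphB ?rmorphN /= !rmorphM /= !horner_mx_X !horner_mx_C -!mulmxE.
have HE : Dp *m Dp - Dp = block_mx R X 0 (R + X).
  rewrite /Dp F0E mulmx_block !mulmx0 !mul0mx !mul1mx !mulmx1 !add0r.
  rewrite mulmxDl mul1mx XR addr0 mulmxDr mulmx1 mulmxDl mul1mx XX addr0.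
  rewrite opp_block_mx add_block_mx oppr0 addr0 subrr.
  congr block_mx; first by rewrite addrC addKr.
  by rewrite opprD !addrA addrAC addrK addrAC addrK.
rewrite HE (scalar_mx_block m m alpha) add_block_mx !addr0 mulmx_block.
rewrite !mulmx0 !mul0mx !addr0 !add0r !mulmxDr !mul_mx_scalar RR RX XR XX !add0r.
rewrite !mulmxDl RR RX XR XX !addr0 -scalerDr -!scalerDl addNr !scale0r.
by rewrite block_mx0.
Qed.

End Core.

Lemma diag_root (F : fieldType) n' (D : 'M[F]_n'.+1) (rs : seq F) : uniq rs ->
  horner_mx D (\prod_(x <- rs) ('X - x%:P)) = 0 ->
  diagonalizable D /\ (forall x, eigenvalue D x -> x \in rs).
Proof.
move=> urs hD; have dv := mxminpoly_min hD; split.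
  by apply/diagonalizableP; exists rs.
by move=> x; rewrite eigenvalue_root_min => /(root_dvdp dv); rewrite root_prod_XsubC.
Qed.

Theorem proposition2p7 (F : fieldType) (k : nat) (B : 'M[F]_(4 * k)) (a : F) :
  2%N \in [pchar F] ->
  (exists s : seq F, uniq s /\ size s = 4%N) ->
  (2 <= k)%N ->
  non_derogative B ->
  a != 0 -> a != 1 ->
  (forall c : F, \tr B = c -> c != 0 ->
     exists N D : 'M[F]_(4 * k),
       [/\ B = N + D, N *m N = 0, diagonalizable D &
           forall x, eigenvalue D x -> x \in [:: 0; c; c * a; c * (a + 1)]]) /\
  (\tr B = 0 ->
     exists N D : 'M[F]_(4 * k),
       [/\ B = N + D, N *m N = 0, diagonalizable D &
           forall x, eigenvalue D x -> x \in [:: 0; 1; a; a + 1]]).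
Proof.
move=> hchar _ hk nd a0 a1.
have two0 : (2%:R : F) = 0 := pcharf0 hchar.
have negE : forall x : F, - x = x.
  by move=> x; apply/eqP; rewrite eq_sym -subr_eq0 opprK -mulr2n -mulr_natr two0 mulr0.
case: k B nd hk => [|[|k']] B nd hk //.
have [m' e m'1] : exists2 m', (4 * k'.+2 = m'.+1 + m'.+1)%N & (m'%:R : F) = 1.
  exists ((k'.+1).*2.+1); first by rewrite -!addnn; lia.
  by rewrite -addn1 natrD -muln2 natrM two0 mulr0 add0r.
move: B nd; rewrite e => B nd.
have mc : mxminpoly B = char_poly B := nd.
have [v [mu [smu smus]]] := cyclic_vec mc.
have Hcyc : forall g, v *m horner_mx B g = 0 -> g = 0 \/ (m'.+1 + m'.+1 < size g)%N.
  move=> g hg; have [mum _ mumin] := smu.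
  have := mumin g hg; have [->|gnz] := eqVneq g 0; first by left.
  by move/(dvdp_leq gnz); rewrite smus; right.
have ap1 : a + 1 != 0.
  by apply: contra a1 => /eqP h; apply/eqP; rewrite -[a](addrK 1) h sub0r negE.
split.
  move=> c trc cnz.
  have [N [D [BND NN hD]]] := decomp_a Hcyc (c * a).
  rewrite (F0_max Hcyc) trc m'1 mul1r in hD.
  have cE : c - c * a = c * (a + 1) by rewrite mulrDr mulr1 addrC negE.
  rewrite cE in hD.
  have h1 : c * a != 0 by rewrite mulf_neq0.
  have h2 : c * (a + 1) != 0 by rewrite mulf_neq0.
  have h3 : c * a != c * (a + 1).
    rewrite (inj_eq (mulfI cnz)); apply/eqP => h.
    by move/eqP: (oner_neq0 F); apply; rewrite -(addKr a 1) -h addNr.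
  have u : uniq [:: 0; c * a; c * (a + 1)].
    by rewrite /= !inE !negb_or ![0 == _]eq_sym h1 h2 h3.
  have [dD eD] := diag_root u hD.
  by exists N, D; split => // x /eD; rewrite !inE => /or3P [] /eqP ->; rewrite eqxx ?orbT.
move=> trc.
have hb := F0_max Hcyc 1; rewrite trc m'1 mul1r sub0r negE in hb.
have [N [D [BND NN hD]]] := decomp_b Hcyc (a * (a + 1)) (erefl 1) hb.
have p2 : (2%:R : {poly F}) = 0 by rewrite -(rmorph_nat (@polyC F)) two0 rmorph0.
have pE : ('X * 'X - 'X) * ('X * 'X - 'X + (a * (a + 1))%:P) =
    \prod_(x <- [:: 0; 1; a; a + 1]) ('X - x%:P).
  rewrite !big_cons big_nil mulr1 subr0 !rmorphD !rmorphM /= !rmorph1.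
  rewrite [RHS](_ : _ = ('X * 'X - 'X) * ('X * 'X - 'X + a%:P * (a%:P + 1))
      - ('X * 'X - 'X) * (a%:P * 'X) * 2%:R); last by ring.
  by rewrite p2 mulr0 subr0 rmorphD /= rmorph1.
rewrite pE in hD.
have n01 : (0 : F) != 1 by rewrite eq_sym oner_neq0.
have n0a : 0 != a by rewrite eq_sym.
have n0a1 : 0 != a + 1 by rewrite eq_sym.
have n1a : 1 != a by rewrite eq_sym.
have n1a1 : 1 != a + 1 by rewrite eq_sym -subr_eq0 addrK.
have naa1 : a != a + 1 by rewrite -subr_eq0 opprD addrA subrr add0r oppr_eq0 oner_neq0.
have u : uniq [:: 0; 1; a; a + 1].
  by rewrite /= !inE !negb_or n01 n0a n0a1 n1a n1a1 naa1.
have [dD eD] := diag_root u hD.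
by exists N, D; split => // x /eD.
Qed.
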